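(* Let $C_1,C_2$ be two vertex-disjoint cycles in a graph, and let $P_1,P_2$ be two vertex-disjoint paths from $C_1$ to $C_2$, where $P_i$ has end-vertices $x_i\in V(C_1)$ and $y_i\in V(C_2)$ for $i=1,2$. If $x_1,x_2$ are mod-non-diagonal in $C_1$ and $y_1,y_2$ are mod-non-diagonal in $C_2$, then $C_1\cup C_2\cup P_1\cup P_2$ contains a cycle of length congruent to $1$ modulo $3$.
   Context: A path from a subgraph $X$ to a subgraph $Y$ is a path whose origin lies in $X$, whose terminus lies in $Y$, and all of whose internal vertices lie outside $X\cup Y$. For a cycle $C$ with an orientation, $\overrightarrow{C}[u,v]$ is the path from $u$ to $v$ along the orientation; two distinct vertices $u,v$ of $C$ are mod-diagonal in $C$ if $|\overrightarrow{C}[u,v]|\equiv|\overrightarrow{C}[v,u]|\pmod 3$ (lengths counted in edges), and mod-non-diagonal otherwise (this does not depend on the chosen orientation). *)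

(* Defs.v *)
From mathcomp Require Import all_boot.
Set Implicit Arguments. Unset Strict Implicit. Unset Printing Implicit Defensive.

Section Defs.
Variable T : finType.

Definition simple_graph (e : rel T) := symmetric e /\ irreflexive e.

(* a cycle given by its cyclic vertex sequence; length = size c *)
Definition is_cycle (e : rel T) (c : seq T) : bool :=
  [&& uniq c, 3 <= size c & cycle e c].

(* a path given by its vertex sequence; length = (size p).-1 *)
Definition is_path (e : rel T) (p : seq T) : bool :=
  uniq p && (if p is x :: q then path e x q else false).

Definition cycle_edges (c : seq T) : rel T :=
  fun x y => ((x, y) \in zip c (rot 1 c)) || ((y, x) \in zip c (rot 1 c)).

Definition path_edges (p : seq T) : rel T :=
  fun x y => ((x, y) \in zip p (behead p)) || ((y, x) \in zip p (behead p)).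

Definition internal (p : seq T) : seq T := behead (take (size p).-1 p).

Definition path_from_to (X Y : seq T) (p : seq T) : bool :=
  if p is x :: q then
    [&& x \in X, last x q \in Y &
        all (fun v => (v \notin X) && (v \notin Y)) (internal p)]
  else false.

(* |C[x,y]| : length of the arc from x to y following the orientation of c *)
Definition arc_len (c : seq T) (x y : T) : nat :=
  (index y c + size c - index x c) %% size c.

Definition mod_diagonal (c : seq T) (x y : T) : bool :=
  arc_len c x y %% 3 == arc_len c y x %% 3.

Definition vdisjoint (s1 s2 : seq T) : bool := all (fun v => v \notin s2) s1.

End Defs.

(* Main.v *)
Require Import Defs.
From mathcomp Require Import all_boot zify.
Set Implicit Arguments. Unset Strict Implicit.

Section Aux.
Variable T : eqType.
Definition arcl (c : seq T) (x y : T) : nat :=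
  (index y c + size c - index x c) %% size c.

Lemma zip_path (x : T) s t :
  path (fun a b => (a, b) \in zip (x :: s) (s ++ t)) x s.
Proof.
elim: s x => [|y s IH] x //=.
rewrite in_cons eqxx /=.
apply: sub_path (IH y) => a b /= H; by rewrite in_cons H orbT.
Qed.

Lemma zip_cycle (c : seq T) :
  cycle (fun a b => (a, b) \in zip c (rot 1 c)) c.
Proof.
case: c => [|x s] //.
rewrite rot1_cons /= rcons_path -cats1 zip_path /=.
rewrite cats1 lastI zip_rcons ?mem_rcons ?mem_head //.
by rewrite size_belast.
Qed.

Lemma rev_rcons_path (r : rel T) : symmetric r ->
  forall a b s, path r a (rcons s b) -> path r b (rcons (rev s) a).
Proof.
move=> sr a b s H.
have := rev_path r a (rcons s b).
rewrite last_rcons belast_rcons (rev_cons a s) => ->.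
by apply: sub_path H => u v; rewrite sr.
Qed.

Lemma build (r : rel T) : symmetric r ->
  forall x1 x2 y1 y2 q1 q2 A B,
  path r x1 q1 -> last x1 q1 = y1 -> path r x2 q2 -> last x2 q2 = y2 ->
  path r y1 (rcons B y2) -> path r x2 (rcons A x1) ->
  cycle r (x1 :: q1 ++ B ++ rev (x2 :: q2) ++ A).
Proof.
move=> sr x1 x2 y1 y2 q1 q2 A B p1 l1 p2 l2 pB pA.
rewrite /= rcons_cat cat_path p1 l1 /= rcons_cat cat_path.
move: pB; rewrite rcons_path => /andP[-> rB] /=.
rewrite lastI l2 rev_rcons /= rB /= rcons_cat cat_path.
have := rev_path r x2 q2; rewrite l2 => ->.
rewrite (eq_path (e' := r)); last by move=> u v; rewrite sr.
rewrite p2 /=.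
suff -> : last y2 (rev (belast x2 q2)) = x2 by [].
case: q2 {p2} l2 => [|z q]; first by move=> <-.
move=> _; have -> : belast x2 (z :: q) = x2 :: belast z q by [].
by rewrite rev_cons last_rcons.
Qed.

Lemma index_rot_arc (c : seq T) x y : uniq c -> x \in c -> y \in c ->
  index y (rot (index x c) c) = arcl c x y.
Proof.
move=> uc hx hy; move: hx uc hy; case/splitPr=> s1 s2 uc hy.
have xs1 : x \notin s1.
  by move: uc; rewrite cat_uniq => /and3P[_ /hasPn H _]; exact: H (mem_head _ _).
have hI : index x (s1 ++ x :: s2) = size s1 by rewrite index_cat (negbTE xs1) /= eqxx addn0.
rewrite hI rot_size_cat /arcl hI size_cat /= !index_cat.
move: uc; rewrite cat_uniq => /and3P[us1 /hasPn H]; rewrite cons_uniq => /andP[xs2 us2].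
move: hy; rewrite mem_cat in_cons => /or3P[ys1|/eqP->|ys2].
- have yx : y != x by apply/negP => /eqP yx; move: xs1; rewrite -yx ys1.
  have ys2 : y \notin s2 by apply/negP => ys2; move: (H y); rewrite in_cons ys2 orbT ys1 => /(_ isT).
  rewrite ys1 (negbTE ys2) eq_sym (negbTE yx) /=.
  have hj : index y s1 < size s1 by rewrite index_mem.
  rewrite modn_small; lia.
- rewrite (negbTE xs1) /= !eqxx /=.
  by rewrite addn0 addKn modnn.
- have ys1 : y \notin s1 by apply: H; rewrite in_cons ys2 orbT.
  have yx : y != x by apply/negP => /eqP yx; move: xs2; rewrite -yx ys2.
  have xyf : (x == y) = false by rewrite eq_sym (negbTE yx).
  rewrite (negbTE ys1) ys2 /= xyf.
  have hj : index y s2 < size s2 by rewrite index_mem.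
  have -> : size s1 + (index y s2).+1 + (size s1 + (size s2).+1) - size s1
     = (index y s2).+1 + (size s1 + (size s2).+1) by lia.
  rewrite modnDr modn_small; lia.
Qed.

Lemma arc_sum (c : seq T) x y : x \in c -> y \in c -> x != y ->
  arcl c x y + arcl c y x = size c.
Proof.
move=> hx hy xy.
have ha : index x c < size c by rewrite index_mem.
have hb : index y c < size c by rewrite index_mem.
have nab : index x c != index y c.
  apply/negP => /eqP E; move/negP: xy; apply; apply/eqP.
  by rewrite -(nth_index x hx) E (nth_index x hy).
rewrite /arcl.
move: (index x c) (index y c) (size c) ha hb nab => a b n ha hb nab.
case: (ltngtP a b) => [ab|ba|E]; last by rewrite E eqxx in nab.
- have -> : b + n - a = (b - a) + n by lia.
  rewrite modnDr !modn_small; lia.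
- have -> : a + n - b = (a - b) + n by lia.
  rewrite modnDr !modn_small; lia.
Qed.

Lemma arcs (r : rel T) (c : seq T) x y : uniq c -> cycle r c -> x \in c -> y \in c ->
  x != y -> exists u w, [/\ path r x (rcons u y), path r y (rcons w x),
    uniq (x :: u ++ y :: w), {subset u ++ w <= c} &
    (size u).+1 = arcl c x y /\ (size w).+1 = arcl c y x].
Proof.
move=> uc cc hx hy xy.
have [t hR yt] : exists2 t, rot (index x c) c = x :: t & y \in t.
  exists (drop (index x c).+1 c ++ take (index x c) c); first by rewrite rot_index.
  have : y \in rot (index x c) c by rewrite mem_rot.
  by rewrite rot_index // in_cons eq_sym (negbTE xy).
case/splitPr: yt hR => u w hR.
have uR : uniq (x :: u ++ y :: w) by rewrite -hR rot_uniq.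
have cR : cycle r (x :: u ++ y :: w) by rewrite -hR rot_cycle.
have ia := @index_rot_arc c x y uc hx hy.
rewrite hR /= (negbTE xy) index_cat in ia.
have yu : y \notin u.
  move: (uR); rewrite cons_uniq cat_uniq => /andP[_ /and3P[_ H _]].
  by apply: contra H => yu; apply/hasP; exists y; [exact: mem_head | exact: yu].
rewrite (negbTE yu) /= eqxx addn0 in ia.
have hs' : size c = (size u + size w).+2.
  by rewrite -(size_rot (index x c)) hR /= size_cat /= addnS.
have := @arc_sum c x y hx hy xy; rewrite -ia hs' => hs.
exists u, w; split => //.
- rewrite rcons_path; move: cR; rewrite /= rcons_cat cat_path => /andP[-> /=]; by case/andP.
- move: cR; rewrite /= rcons_cat cat_path => /andP[_ /=]; by case/andP.
- move=> v; rewrite -(mem_rot (index x c) c) hR mem_cat in_cons mem_cat in_cons => /orP[->|->]; by rewrite !orbT.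
- split; lia.
Qed.

Lemma take_belast (x : T) q : take (size q) (x :: q) = belast x q.
Proof. by elim: q x => [|y q IH] x //=; rewrite IH. Qed.

Lemma uniq_split (x y : T) u w : uniq (x :: u ++ y :: w) ->
  [/\ uniq u, uniq w, x \notin u, x \notin w & (y \notin u) && (y \notin w)].
Proof.
rewrite cons_uniq mem_cat negb_or in_cons negb_or cat_uniq cons_uniq.
move=> /andP[/andP[xu /andP[xy xw]] /and3P[uu hh /andP[yw uw]]].
split => //; rewrite yw andbT.
by apply: contra hh => yu; apply/hasP; exists y => //; exact: mem_head.
Qed.

Lemma uniq4 (P1 P2 A B C1 C2 : seq T) x1 x2 y1 y2 :
  uniq P1 -> uniq P2 -> uniq A -> uniq B ->
  (forall v, v \in P1 -> v \notin P2) ->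
  {subset A <= C1} -> {subset B <= C2} -> (forall v, v \in C1 -> v \notin C2) ->
  (forall v, v \in P1 -> v \in C1 -> v = x1) -> (forall v, v \in P1 -> v \in C2 -> v = y1) ->
  (forall v, v \in P2 -> v \in C1 -> v = x2) -> (forall v, v \in P2 -> v \in C2 -> v = y2) ->
  x1 \notin A -> x2 \notin A -> y1 \notin B -> y2 \notin B ->
  uniq (P1 ++ B ++ rev P2 ++ A).
Proof.
move=> u1 u2 uA uB d12 sA sB d hP1C1 hP1C2 hP2C1 hP2C2 x1A x2A y1B y2B.
rewrite !cat_uniq rev_uniq u1 u2 uA uB /=.
rewrite andbT; apply/and3P; split; apply/hasPn => v; rewrite ?mem_cat ?mem_rev.
- case/or3P => h; apply/negP => h'.
  + by move: y1B; rewrite -(hP1C2 v h' (sB v h)) h.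
  + by move: (d12 v h'); rewrite h.
  + by move: x1A; rewrite -(hP1C1 v h' (sA v h)) h.
- case/orP => h; apply/negP => h'.
  + by move: y2B; rewrite -(hP2C2 v h (sB v h')) h'.
  + by move: (d v (sA v h)); rewrite (sB v h').
- move=> h; apply/negP => h'.
  by move: x2A; rewrite -(hP2C1 v h' (sA v h)) h.
Qed.

Lemma choose3 s a b c d : a %% 3 != b %% 3 -> c %% 3 != d %% 3 ->
  [\/ (s + a + c) %% 3 = 1, (s + a + d) %% 3 = 1, (s + b + c) %% 3 = 1 | (s + b + d) %% 3 = 1].
Proof.
move=> /eqP h1 /eqP h2.
have : (s + a + c) %% 3 = 1 \/ (s + a + d) %% 3 = 1 \/ (s + b + c) %% 3 = 1 \/ (s + b + d) %% 3 = 1 by lia.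
by case=> [h|[h|[h|h]]]; [constructor 1|constructor 2|constructor 3|constructor 4].
Qed.
End Aux.

Section Aux2.
Variable T : finType.

Lemma internal_mem (x : T) q v : v \in x :: q -> v != x -> v != last x q ->
  v \in internal (x :: q).
Proof.
rewrite /internal /= take_belast lastI mem_rcons in_cons => /orP[/eqP->|]; first by rewrite eqxx.
case: q => [|y q] //= h vx _.
by move: h; rewrite in_cons (negbTE vx).
Qed.

Lemma pft (X Y q : seq T) x : (forall v, v \in X -> v \notin Y) ->
  path_from_to X Y (x :: q) ->
  [/\ (forall v, v \in x :: q -> v \in X -> v = x),
      (forall v, v \in x :: q -> v \in Y -> v = last x q), x \in X & last x q \in Y].
Proof.
move=> dXY /and3P[xX lY /allP hi].
split => // v hv.
- move=> vX; apply/eqP; apply/negPn/negP => vx.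
  case: (eqVneq v (last x q)) => [vl|vl].
    by move: (dXY v vX); rewrite vl lY.
  by move: (hi v (@internal_mem x q v hv vx vl)); rewrite vX.
- move=> vY; apply/eqP; apply/negPn/negP => vl.
  case: (eqVneq v x) => [vx|vx].
    by move: (dXY v); rewrite vx xX -vx vY => /(_ isT).
  by move: (hi v (@internal_mem x q v hv vx vl)); rewrite vY andbF.
Qed.
End Aux2.
Unset Implicit Arguments. Set Strict Implicit.
Theorem lemma2p4 (T : finType) (e : rel T) (C1 C2 P1 P2 : seq T)
    (x1 x2 y1 y2 : T) :
  simple_graph e ->
  is_cycle e C1 -> is_cycle e C2 -> vdisjoint C1 C2 ->
  is_path e P1 -> is_path e P2 -> vdisjoint P1 P2 ->
  path_from_to C1 C2 P1 -> path_from_to C1 C2 P2 ->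
  ohead P1 = Some x1 -> last x1 P1 = y1 ->
  ohead P2 = Some x2 -> last x2 P2 = y2 ->
  ~~ mod_diagonal C1 x1 x2 -> ~~ mod_diagonal C2 y1 y2 ->
  exists c : seq T,
    is_cycle (fun u v => [|| cycle_edges C1 u v, cycle_edges C2 u v,
                             path_edges P1 u v | path_edges P2 u v]) c
    /\ size c %% 3 = 1.
Proof.
move=> _ /and3P[uC1 _ _] /and3P[uC2 _ _] dC hp1 hp2 dP pf1 pf2 h1 l1 h2 l2 md1 md2.
case: P1 h1 l1 hp1 pf1 dP => [|a q1] // [ea]; subst a => /= l1 /andP[uP1 _] pf1 dP.
case: P2 h2 l2 hp2 pf2 dP => [|a q2] // [ea]; subst a => /= l2 /andP[uP2 _] pf2 dP.
pose R : rel T := fun u v => [|| cycle_edges C1 u v, cycle_edges C2 u v,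
                             path_edges (x1 :: q1) u v | path_edges (x2 :: q2) u v].
suff : exists c, is_cycle R c /\ size c %% 3 = 1 by [].
have symR : symmetric R.
  move=> a b; rewrite /R /cycle_edges /path_edges.
  by rewrite (orbC ((a,b) \in zip C1 (rot 1 C1))) (orbC ((a,b) \in zip C2 (rot 1 C2)))
    (orbC ((a,b) \in zip (x1 :: q1) (behead (x1 :: q1))))
    (orbC ((a,b) \in zip (x2 :: q2) (behead (x2 :: q2)))).
have pq1 : path R x1 q1.
  have := zip_path x1 q1 [::]; rewrite cats0; apply: sub_path => a b h.
  by rewrite /R /path_edges /= h !orbT.
have pq2 : path R x2 q2.
  have := zip_path x2 q2 [::]; rewrite cats0; apply: sub_path => a b h.
  by rewrite /R /path_edges /= h !orbT.
have cC1 : cycle R C1.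
  by have := zip_cycle C1; apply: sub_cycle => a b h; rewrite /R /cycle_edges h.
have cC2 : cycle R C2.
  by have := zip_cycle C2; apply: sub_cycle => a b h; rewrite /R /cycle_edges h !orbT.
have dC' : forall v, v \in C1 -> v \notin C2 by apply/allP.
have dP' : forall v, v \in x1 :: q1 -> v \notin x2 :: q2 by apply/allP.
have [hP1C1 hP1C2 x1C1 y1C2] := @pft T C1 C2 q1 x1 dC' pf1.
have [hP2C1 hP2C2 x2C1 y2C2] := @pft T C1 C2 q2 x2 dC' pf2.
rewrite l1 in hP1C2 y1C2; rewrite l2 in hP2C2 y2C2.
have x12 : x1 != x2.
  by apply/negP => /eqP E; move: (dP' x1 (mem_head _ _)); rewrite E mem_head.
have y12 : y1 != y2.
  apply/negP => /eqP E; have := dP' y1; rewrite -{1}l1 mem_last => /(_ isT).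
  by rewrite E -l2 mem_last.
have [u1 [w1 [pu1 pw1 uu1 su1 [su1' sw1']]]] := @arcs T R C1 x1 x2 uC1 cC1 x1C1 x2C1 x12.
have [u2 [w2 [pu2 pw2 uu2 su2 [su2' sw2']]]] := @arcs T R C2 y1 y2 uC2 cC2 y1C2 y2C2 y12.
have [uu1' uw1' x1u1 x1w1 /andP[x2u1 x2w1]] := uniq_split uu1.
have [uu2' uw2' y1u2 y1w2 /andP[y2u2 y2w2]] := uniq_split uu2.
have md1' : (size w1).+1 %% 3 != (size u1).+1 %% 3.
  have E1 : arc_len C1 x1 x2 = arcl C1 x1 x2 by [].
  have E2 : arc_len C1 x2 x1 = arcl C1 x2 x1 by [].
  by move: md1; rewrite /mod_diagonal E1 E2 -su1' -sw1' eq_sym.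
have md2' : (size u2).+1 %% 3 != (size w2).+1 %% 3.
  have E1 : arc_len C2 y1 y2 = arcl C2 y1 y2 by [].
  have E2 : arc_len C2 y2 y1 = arcl C2 y2 y1 by [].
  by move: md2; rewrite /mod_diagonal E1 E2 -su2' -sw2'.
have q1n : 0 < size q1.
  case E: q1 => //; move: l1 (dC' x1 x1C1); rewrite E /= => ->; by rewrite y1C2.
have q2n : 0 < size q2.
  case E: q2 => //; move: l2 (dC' x2 x2C1); rewrite E /= => ->; by rewrite y2C2.
have key : forall A B, path R x2 (rcons A x1) -> path R y1 (rcons B y2) ->
   uniq A -> uniq B -> {subset A <= C1} -> {subset B <= C2} ->
   x1 \notin A -> x2 \notin A -> y1 \notin B -> y2 \notin B ->
   (size q1 + size q2 + (size A).+1 + (size B).+1) %% 3 = 1 ->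
   exists c, is_cycle R c /\ size c %% 3 = 1.
  move=> A B pA pB uA uB sA sB x1A x2A y1B y2B hm.
  exists (x1 :: q1 ++ B ++ rev (x2 :: q2) ++ A).
  rewrite /is_cycle (@build T R symR x1 x2 y1 y2 q1 q2 A B pq1 l1 pq2 l2 pB pA) andbT.
  rewrite (@uniq4 T (x1 :: q1) (x2 :: q2) A B C1 C2 x1 x2 y1 y2 uP1 uP2 uA uB dP' sA sB dC'
     hP1C1 hP1C2 hP2C1 hP2C2 x1A x2A y1B y2B) /=.
  rewrite !size_cat size_rev /=.
  move: hm q1n q2n; move: (size q1) (size q2) (size A) (size B) => a b c d.
  move=> hm ha hb; split; first by clear -ha hb; lia.
  have -> : (a + (d + (b.+1 + c))).+1 = a + b + c.+1 + d.+1 by clear -ha; lia.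
  exact: hm.
have sw1 : {subset w1 <= C1} by move=> v hv; apply: su1; rewrite mem_cat hv orbT.
have su1r : {subset rev u1 <= C1} by move=> v; rewrite mem_rev => hv; apply: su1; rewrite mem_cat hv.
have su2s : {subset u2 <= C2} by move=> v hv; apply: su2; rewrite mem_cat hv.
have sw2r : {subset rev w2 <= C2} by move=> v; rewrite mem_rev => hv; apply: su2; rewrite mem_cat hv orbT.
have pu1r := rev_rcons_path symR pu1.
have pw2r := rev_rcons_path symR pw2.
case: (choose3 (size q1 + size q2) md1' md2') => hm.
- exact: (key w1 u2 pw1 pu2 uw1' uu2' sw1 su2s x1w1 x2w1 y1u2 y2u2 hm).
- apply: (key w1 (rev w2) pw1 pw2r uw1' _ sw1 sw2r x1w1 x2w1); rewrite ?rev_uniq ?mem_rev ?size_rev //.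
- apply: (key (rev u1) u2 pu1r pu2 _ uu2' su1r su2s _ _ y1u2 y2u2); rewrite ?rev_uniq ?mem_rev ?size_rev //.
- apply: (key (rev u1) (rev w2) pu1r pw2r _ _ su1r sw2r); rewrite ?rev_uniq ?mem_rev ?size_rev //.
Qed.
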